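(* Let $M$ be a positive integer and let $S\subset\mathbb{R}^4$ be a finite set with $|S|\ge M+1$. For each $\lambda\in S$, let $B_\lambda$ be the smallest closed ball centered at $\lambda$ containing at least $M+1$ points of $S$ (counting $\lambda$ itself), and let $R_\lambda$ be its radius. For $\lambda\in S$ let \[ L_\lambda=\{\lambda'\in S: R_{\lambda'}\ge R_\lambda \text{ and } B_\lambda\cap B_{\lambda'}\neq\emptyset\}. \] Then $|L_\lambda|\ll M$ for every $\lambda\in S$, with an absolute implied constant.
   Context: Balls and distances are Euclidean in $\mathbb{R}^4$. *)

(* Defs.v *)
From Stdlib Require Import Reals List.
Import ListNotations.
Open Scope R_scope.

Definition pt4 : Type := (R * R * R * R)%type.

Definition dist4 (p q : pt4) : R :=
  let '(a1, a2, a3, a4) := p in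
  let '(b1, b2, b3, b4) := q in
  sqrt ((a1 - b1)^2 + (a2 - b2)^2 + (a3 - b3)^2 + (a4 - b4)^2).

Definition in_ball (c : pt4) (r : R) (x : pt4) : Prop := dist4 c x <= r.

Definition ball_contains_at_least (S : list pt4) (c : pt4) (r : R) (k : nat) : Prop :=
  exists l : list pt4, NoDup l /\ (k <= length l)%nat /\
    forall x, In x l -> In x S /\ in_ball c r x.

Definition is_min_radius (S : list pt4) (M : nat) (c : pt4) (r : R) : Prop :=
  ball_contains_at_least S c r (M + 1)%nat /\
  forall r', ball_contains_at_least S c r' (M + 1)%nat -> r <= r'.

Definition balls_meet (c : pt4) (r : R) (c' : pt4) (r' : R) : Prop :=
  exists x : pt4, in_ball c r x /\ in_ball c' r' x.

(* Main.v *)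
Require Import Defs.
From Stdlib Require Import Reals List Lra Lia Psatz ZArith.
Open Scope R_scope.

Lemma count_classes {A T : Type} (eqd : forall a b : T, {a = b} + {a <> b})
  (Q : A -> Prop) (f : A -> T) (M : nat)
  (H : forall k L', NoDup L' -> (forall x, In x L' -> Q x /\ f x = k) -> (length L' <= M)%nat) :
  forall all L, NoDup L -> (forall x, In x L -> Q x /\ In (f x) all) ->
    (length L <= length all * M)%nat.
Proof.
  induction all as [|a all IH]; intros L HL HQ.
  - destruct L as [|x L]; simpl; [lia|]. destruct (HQ x (or_introl eq_refl)) as [_ []].
  - set (g := fun x => if eqd (f x) a then true else false).
    rewrite <- (filter_length g L).
    assert (H1 : (length (filter g L) <= M)%nat).
    { apply (H a). apply NoDup_filter; auto.
      intros x Hx. apply filter_In in Hx as [Hx Hg]. split; [apply HQ; auto|].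
      unfold g in Hg. destruct (eqd (f x) a); congruence. }
    assert (H2 : (length (filter (fun x => negb (g x)) L) <= length all * M)%nat).
    { apply IH. apply NoDup_filter; auto.
      intros x Hx. apply filter_In in Hx as [Hx Hg]. destruct (HQ x Hx) as [Hq Hi].
      split; auto. unfold g in Hg. destruct (eqd (f x) a); [discriminate|].
      destruct Hi; [congruence|auto]. }
    simpl. lia.
Qed.

Lemma max_in_list {A : Type} (g : A -> R) (l : list A) (x0 : A) :
  In x0 l -> exists m, In m l /\ forall x, In x l -> g x <= g m.
Proof.
  revert x0; induction l as [|a l IH]; intros x0 Hx0; [destruct Hx0|].
  destruct l as [|b l'].
  - exists a; split; [left; auto|]. intros x [<-|[]]; lra.
  - destruct (IH b (or_introl eq_refl)) as [m [Hm Hmax]].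
    destruct (Rle_dec (g a) (g m)).
    + exists m; split; [right; auto|]. intros x [<-|Hx]; auto.
    + exists a; split; [left; auto|]. intros x [<-|Hx]; [lra|].
      specialize (Hmax x Hx); lra.
Qed.

Lemma fold_max_lt (l : list pt4) (g : pt4 -> R) (r : R) :
  0 < r -> (forall x, In x l -> g x < r) ->
  fold_right (fun x acc => Rmax (g x) acc) 0 l < r /\
  forall x, In x l -> g x <= fold_right (fun x acc => Rmax (g x) acc) 0 l.
Proof.
  intros Hr; induction l as [|a l IH]; intros Hl; simpl.
  - split; [lra|tauto].
  - assert (IH' : forall x, In x l -> g x < r) by (intros; apply Hl; simpl; auto).
    destruct (IH IH') as [H1 H2].
    split.
    + apply Rmax_lub_lt; [apply Hl; left; auto|auto].
    + intros x [<-|Hx]; [apply Rmax_l|]. eapply Rle_trans; [apply H2; auto|apply Rmax_r].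
Qed.

Lemma dist4_nonneg p q : 0 <= dist4 p q.
Proof. destruct p as [[[? ?] ?] ?], q as [[[? ?] ?] ?]; simpl; apply sqrt_pos. Qed.

Lemma cluster (S : list pt4) (M : nat) (mu : pt4) (r : R) (L : list pt4) :
  is_min_radius S M mu r -> NoDup L -> (forall x, In x L -> In x S /\ dist4 mu x < r) ->
  (length L <= M)%nat.
Proof.
  intros [_ Hmin] HL HLS.
  destruct (le_lt_dec (length L) M) as [h|h]; auto. exfalso.
  destruct L as [|x0 L0]; [simpl in h; lia|].
  assert (Hr : 0 < r).
  { destruct (HLS x0 (or_introl eq_refl)) as [_ Hd]. pose proof (dist4_nonneg mu x0). lra. }
  destruct (fold_max_lt (x0 :: L0) (dist4 mu) r Hr) as [H1 H2].
  { intros x Hx; apply HLS; auto. }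
  set (r0 := fold_right _ _ _) in *.
  assert (r <= r0); [|lra].
  apply Hmin. exists (x0 :: L0). split; auto. split; [lia|].
  intros x Hx. split; [apply HLS; auto|]. unfold in_ball. apply H2; auto.
Qed.

Lemma sqrt_mul_ge (A B c : R) : 0 <= A -> 0 <= B -> c * c <= A * B -> c <= sqrt A * sqrt B.
Proof.
  intros HA HB Hc. rewrite <- sqrt_mult_alt by auto.
  destruct (Rle_dec c 0). - pose proof (sqrt_pos (A*B)); lra.
  - rewrite <- (sqrt_square c) by lra. apply sqrt_le_1_alt; lra.
Qed.

Lemma tri4 (p1 p2 p3 p4 q1 q2 q3 q4 : R) :
  sqrt ((p1+q1)^2 + (p2+q2)^2 + (p3+q3)^2 + (p4+q4)^2) <=
  sqrt (p1^2+p2^2+p3^2+p4^2) + sqrt (q1^2+q2^2+q3^2+q4^2).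
Proof.
  set (P := p1^2+p2^2+p3^2+p4^2). set (Q := q1^2+q2^2+q3^2+q4^2).
  assert (HP : 0 <= P) by (unfold P; nra). assert (HQ : 0 <= Q) by (unfold Q; nra).
  assert (Hc : p1*q1+p2*q2+p3*q3+p4*q4 <= sqrt P * sqrt Q).
  { apply sqrt_mul_ge; auto. unfold P, Q.
    assert (E : (p1^2+p2^2+p3^2+p4^2)*(q1^2+q2^2+q3^2+q4^2) - (p1*q1+p2*q2+p3*q3+p4*q4)*(p1*q1+p2*q2+p3*q3+p4*q4) = (p1*q2-p2*q1)^2 + (p1*q3-p3*q1)^2 + (p1*q4-p4*q1)^2 + (p2*q3-p3*q2)^2
       + (p2*q4-p4*q2)^2 + (p3*q4-p4*q3)^2) by ring.
    assert (0 <= (p1*q2-p2*q1)^2 + (p1*q3-p3*q1)^2 + (p1*q4-p4*q1)^2 + (p2*q3-p3*q2)^2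
       + (p2*q4-p4*q2)^2 + (p3*q4-p4*q3)^2) by (repeat apply Rplus_le_le_0_compat; apply pow2_ge_0).
    lra. }
  pose proof (sqrt_pos P). pose proof (sqrt_pos Q).
  rewrite <- (sqrt_square (sqrt P + sqrt Q)) by lra.
  apply sqrt_le_1_alt.
  assert (sqrt P * sqrt P = P) by (apply sqrt_sqrt; auto).
  assert (sqrt Q * sqrt Q = Q) by (apply sqrt_sqrt; auto).
  unfold P, Q in *. nra.
Qed.

Lemma dist_tri (a b c : pt4) : dist4 a c <= dist4 a b + dist4 c b.
Proof.
  destruct a as [[[a1 a2] a3] a4], b as [[[b1 b2] b3] b4], c as [[[c1 c2] c3] c4]; unfold dist4; cbv beta iota.
  replace ((c1-b1)^2+(c2-b2)^2+(c3-b3)^2+(c4-b4)^2) with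
    ((b1-c1)^2+(b2-c2)^2+(b3-c3)^2+(b4-c4)^2) by ring.
  pose proof (tri4 (a1-b1) (a2-b2) (a3-b3) (a4-b4) (b1-c1) (b2-c2) (b3-c3) (b4-c4)).
  replace (a1 - b1 + (b1 - c1)) with (a1 - c1) in H by ring.
  replace (a2 - b2 + (b2 - c2)) with (a2 - c2) in H by ring.
  replace (a3 - b3 + (b3 - c3)) with (a3 - c3) in H by ring.
  replace (a4 - b4 + (b4 - c4)) with (a4 - c4) in H by ring.
  exact H.
Qed.

Lemma dist_zero (a b : pt4) : dist4 a b <= 0 -> a = b.
Proof.
  destruct a as [[[a1 a2] a3] a4], b as [[[b1 b2] b3] b4]; unfold dist4; cbv beta iota; intros H.
  set (X := (a1-b1)^2+(a2-b2)^2+(a3-b3)^2+(a4-b4)^2) in H.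
  assert (HX : 0 <= X) by (unfold X; repeat apply Rplus_le_le_0_compat; apply pow2_ge_0).
  assert (X = 0).
  { pose proof (sqrt_pos X). assert (sqrt X = 0) by lra.
    rewrite <- (sqrt_sqrt X HX). rewrite H1. ring. }
  unfold X in H0.
  pose proof (pow2_ge_0 (a1-b1)); pose proof (pow2_ge_0 (a2-b2)); pose proof (pow2_ge_0 (a3-b3)); pose proof (pow2_ge_0 (a4-b4)).
  assert (a1 = b1) by nra. assert (a2 = b2) by nra. assert (a3 = b3) by nra. assert (a4 = b4) by nra.
  subst; reflexivity.
Qed.

Lemma core0 (a b u1 u2 u3 u4 v1 v2 v3 v4 : R) :
  u1^2+u2^2+u3^2+u4^2 = 1 -> v1^2+v2^2+v3^2+v4^2 = 1 ->
  (a*u1-b*v1)^2+(a*u2-b*v2)^2+(a*u3-b*v3)^2+(a*u4-b*v4)^2 =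
  (a-b)^2 + a*b*((u1-v1)^2+(u2-v2)^2+(u3-v3)^2+(u4-v4)^2).
Proof.
  intros HU HV.
  assert (E : (a*u1-b*v1)^2+(a*u2-b*v2)^2+(a*u3-b*v3)^2+(a*u4-b*v4)^2 -
  ((a-b)^2 + a*b*((u1-v1)^2+(u2-v2)^2+(u3-v3)^2+(u4-v4)^2)) =
   (a*a-a*b)*(u1^2+u2^2+u3^2+u4^2 - 1) + (b*b-a*b)*(v1^2+v2^2+v3^2+v4^2-1)) by ring.
  rewrite HU, HV in E. lra.
Qed.

Lemma unit_norm (y1 y2 y3 y4 : R) :
  0 < sqrt (y1^2+y2^2+y3^2+y4^2) ->
  let a := sqrt (y1^2+y2^2+y3^2+y4^2) in
  (y1/a)^2+(y2/a)^2+(y3/a)^2+(y4/a)^2 = 1.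
Proof.
  intros Ha a.
  assert (HY : 0 <= y1^2+y2^2+y3^2+y4^2) by (repeat apply Rplus_le_le_0_compat; apply pow2_ge_0).
  assert (a * a = y1^2+y2^2+y3^2+y4^2) by (apply sqrt_sqrt; auto).
  fold a in Ha.
  replace ((y1/a)^2+(y2/a)^2+(y3/a)^2+(y4/a)^2) with ((y1^2+y2^2+y3^2+y4^2)/(a*a)) by (field; lra).
  rewrite <- H. field. lra.
Qed.

Lemma core (x1 x2 x3 x4 y1 y2 y3 y4 R ry : R) :
  let a := sqrt (y1^2+y2^2+y3^2+y4^2) in
  let b := sqrt (x1^2+x2^2+x3^2+x4^2) in
  0 < R -> R <= b -> b <= a ->
  (y1/a - x1/b)^2 < 1/64 -> (y2/a - x2/b)^2 < 1/64 ->
  (y3/a - x3/b)^2 < 1/64 -> (y4/a - x4/b)^2 < 1/64 ->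
  (a < 3*R/2 \/ (3*R/2 <= b /\ a < 2*R) \/ 2*R <= b) ->
  R <= ry -> a - R <= ry ->
  (y1-x1)^2+(y2-x2)^2+(y3-x3)^2+(y4-x4)^2 < ry^2.
Proof.
  intros a b HR Hb Hab H1 H2 H3 H4 Hsh Hr1 Hr2.
  assert (Ha : 0 < a) by lra. assert (Hb0 : 0 < b) by lra.
  pose proof (unit_norm y1 y2 y3 y4 Ha) as HU. pose proof (unit_norm x1 x2 x3 x4 Hb0) as HV.
  fold a in HU. fold b in HV.
  pose proof (core0 a b (y1/a) (y2/a) (y3/a) (y4/a) (x1/b) (x2/b) (x3/b) (x4/b) HU HV) as E.
  replace (a*(y1/a)) with y1 in E by (field; lra).
  replace (a*(y2/a)) with y2 in E by (field; lra).
  replace (a*(y3/a)) with y3 in E by (field; lra).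
  replace (a*(y4/a)) with y4 in E by (field; lra).
  replace (b*(x1/b)) with x1 in E by (field; lra).
  replace (b*(x2/b)) with x2 in E by (field; lra).
  replace (b*(x3/b)) with x3 in E by (field; lra).
  replace (b*(x4/b)) with x4 in E by (field; lra).
  rewrite E.
  set (D := (y1 / a - x1 / b) ^ 2 + (y2 / a - x2 / b) ^ 2 + (y3 / a - x3 / b) ^ 2 +
      (y4 / a - x4 / b) ^ 2).
  assert (HD : D < 1/16) by (unfold D; lra).
  assert (HD0 : 0 <= D) by (unfold D; repeat apply Rplus_le_le_0_compat; apply pow2_ge_0).
  assert (Hab0 : 0 < a*b) by nra.
  assert (a*b*D <= a*b*(1/16)) by nra.
  destruct Hsh as [Hs|[Hs|Hs]].
  - assert (a*b <= 9/4*R*R) by nra. assert (R*R <= ry*ry) by nra. nra.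
  - assert (a*b <= 4*R*R) by nra. assert (R*R <= ry*ry) by nra. nra.
  - assert ((a-R)*(a-R) <= ry*ry) by nra.
    assert ((a-R)^2 - (a-b)^2 >= a*b/4) by nra. nra.
Qed.

Lemma dist_form l1 l2 l3 l4 n1 n2 n3 n4 :
  dist4 (l1,l2,l3,l4) (n1,n2,n3,n4) = sqrt ((n1-l1)^2+(n2-l2)^2+(n3-l3)^2+(n4-l4)^2).
Proof. unfold dist4; cbv beta iota. f_equal. ring. Qed.

Definition cls (lam : pt4) (R : R) (nu : pt4) : nat * Z * Z * Z * Z :=
  let '(l1,l2,l3,l4) := lam in let '(n1,n2,n3,n4) := nu in
  let d := dist4 lam nu in
  if Rlt_dec d R then (0%nat,0%Z,0%Z,0%Z,0%Z) else
  ((if Rlt_dec d (3*R/2) then 1 else if Rlt_dec d (2*R) then 2 else 3)%nat,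
   up (8*((n1-l1)/d+1)), up (8*((n2-l2)/d+1)), up (8*((n3-l3)/d+1)), up (8*((n4-l4)/d+1))).

Lemma up_close u v : up (8*(u+1)) = up (8*(v+1)) -> (u - v)^2 < 1/64.
Proof.
  intros H. destruct (archimed (8*(u+1))) as [A1 A2]. destruct (archimed (8*(v+1))) as [B1 B2].
  rewrite H in A1, A2. assert (-1/8 < u - v < 1/8) by lra. nra.
Qed.

Lemma pair_lemma (lam mu x : pt4) (R rmu : R) :
  0 < R -> R <= rmu -> dist4 lam mu <= R + rmu ->
  cls lam R x = cls lam R mu -> R <= dist4 lam mu -> dist4 lam x <= dist4 lam mu ->
  dist4 mu x < rmu.
Proof.
  destruct lam as [[[l1 l2] l3] l4], mu as [[[m1 m2] m3] m4], x as [[[n1 n2] n3] n4].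
  intros HR Hr Htri Hc Hmu Hxmu. unfold cls in Hc. cbv beta iota zeta in Hc.
  rewrite !dist_form in *.
  set (a := sqrt ((m1 - l1) ^ 2 + (m2 - l2) ^ 2 + (m3 - l3) ^ 2 + (m4 - l4) ^ 2)) in *.
  set (b := sqrt ((n1 - l1) ^ 2 + (n2 - l2) ^ 2 + (n3 - l3) ^ 2 + (n4 - l4) ^ 2)) in *.
  destruct (Rlt_dec a R) as [|_]; [lra|].
  destruct (Rlt_dec b R) as [Hb|Hb].
  { destruct (Rlt_dec a (3*R/2)); [discriminate|]. destruct (Rlt_dec a (2*R)); discriminate. }
  injection Hc as Hs E1 E2 E3 E4.
  symmetry in E1, E2, E3, E4. apply up_close in E1, E2, E3, E4.
  assert (Hsh : a < 3*R/2 \/ (3*R/2 <= b /\ a < 2*R) \/ 2*R <= b).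
  { destruct (Rlt_dec b (3*R/2)); destruct (Rlt_dec a (3*R/2)); try (left; lra);
    destruct (Rlt_dec b (2*R)); destruct (Rlt_dec a (2*R)); try discriminate; lra. }
  pose proof (core (n1-l1) (n2-l2) (n3-l3) (n4-l4) (m1-l1) (m2-l2) (m3-l3) (m4-l4) R rmu
     HR ltac:(fold b; lra) ltac:(fold a b; lra)) as C.
  fold a b in C.
  specialize (C E1 E2 E3 E4 Hsh Hr ltac:(lra)).
  unfold dist4; cbv beta iota.
  rewrite <- (sqrt_pow2 rmu) by lra.
  apply sqrt_lt_1_alt. split.
  - repeat apply Rplus_le_le_0_compat; apply pow2_ge_0.
  - eapply Rle_lt_trans; [|exact C]; right; ring.
Qed.

Definition zs : list Z := map Z.of_nat (seq 0 18).

Lemma in_zs_up u : -1 <= u <= 1 -> In (up (8*(u+1))) zs.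
Proof.
  intros Hu. destruct (archimed (8*(u+1))) as [A1 A2].
  set (z := up (8*(u+1))) in *.
  assert (Hz1 : (0 < z)%Z) by (apply lt_IZR; simpl; lra).
  assert (Hz2 : (z <= 17)%Z) by (apply le_IZR; simpl; lra).
  unfold zs. apply in_map_iff. exists (Z.to_nat z). split; [apply Z2Nat.id; lia|].
  apply in_seq. lia.
Qed.

Lemma coord_bound (x1 x2 x3 x4 : R) :
  0 < sqrt (x1^2+x2^2+x3^2+x4^2) ->
  let b := sqrt (x1^2+x2^2+x3^2+x4^2) in
  -1 <= x1/b <= 1 /\ -1 <= x2/b <= 1 /\ -1 <= x3/b <= 1 /\ -1 <= x4/b <= 1.
Proof.
  intros Hb b. pose proof (unit_norm x1 x2 x3 x4 Hb) as U. fold b in U.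
  pose proof (pow2_ge_0 (x1/b)); pose proof (pow2_ge_0 (x2/b));
  pose proof (pow2_ge_0 (x3/b)); pose proof (pow2_ge_0 (x4/b)).
  repeat split; nra.
Qed.

Definition all_cls : list (nat * Z * Z * Z * Z) :=
  list_prod (list_prod (list_prod (list_prod (seq 0 4) zs) zs) zs) zs.

Lemma cls_in (lam nu : pt4) (R : R) : 0 < R -> In (cls lam R nu) all_cls.
Proof.
  intros HR. destruct lam as [[[l1 l2] l3] l4], nu as [[[n1 n2] n3] n4].
  unfold cls; cbv beta iota zeta. rewrite dist_form.
  set (b := sqrt ((n1 - l1) ^ 2 + (n2 - l2) ^ 2 + (n3 - l3) ^ 2 + (n4 - l4) ^ 2)).
  unfold all_cls.
  destruct (Rlt_dec b R) as [Hb|Hb].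
  - assert (In 0%Z zs) by (unfold zs; apply in_map_iff; exists 0%nat; split; [auto|apply in_seq; lia]).
    repeat (apply in_prod_iff; split); auto. apply in_seq; lia.
  - assert (Hb0 : 0 < b) by lra.
    destruct (coord_bound (n1-l1) (n2-l2) (n3-l3) (n4-l4) Hb0) as [B1 [B2 [B3 B4]]].
    fold b in B1, B2, B3, B4.
    repeat (apply in_prod_iff; split); try (apply in_zs_up; auto).
    apply in_seq. destruct (Rlt_dec b (3*R/2)); [lia|]. destruct (Rlt_dec b (2*R)); lia.
Qed.


Lemma cls_eqd : forall a b : nat * Z * Z * Z * Z, {a = b} + {a <> b}.
Proof. repeat decide equality. Qed.

Lemma R_pos (S : list pt4) (M : nat) (lam : pt4) (r : R) :
  (1 <= M)%nat -> is_min_radius S M lam r -> 0 < r.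
Proof.
  intros HM [[l [Hnd [Hlen Hl]]] _].
  destruct (Rlt_dec 0 r) as [|Hr]; auto. exfalso.
  destruct l as [|a [|b l]]; simpl in Hlen; try lia.
  assert (a = lam). { symmetry; apply dist_zero. destruct (Hl a (or_introl eq_refl)) as [_ Hh]. unfold in_ball in Hh. lra. }
  assert (b = lam). { symmetry; apply dist_zero. destruct (Hl b (or_intror (or_introl eq_refl))) as [_ Hh]. unfold in_ball in Hh. lra. }
  inversion Hnd; subst. apply H3; left; auto.
Qed.

Theorem lemma4p5 :
  exists C : R, 0 < C /\
  forall (M : nat) (S : list pt4) (Rad : pt4 -> R),
    (1 <= M)%nat ->
    NoDup S ->
    (M + 1 <= length S)%nat ->
    (forall lam, In lam S -> is_min_radius S M lam (Rad lam)) ->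
    forall lam, In lam S ->
    forall L : list pt4, NoDup L ->
      (forall lam', In lam' L ->
         In lam' S /\ Rad lam <= Rad lam' /\
         balls_meet lam (Rad lam) lam' (Rad lam')) ->
      INR (length L) <= C * INR M.
Proof.
  exists (INR (length all_cls)). split.
  { apply lt_0_INR. unfold all_cls. rewrite !length_prod. unfold zs. rewrite length_map, !length_seq. lia. }
  intros M S Rad HM HS HlenS Hrad lam Hlam L HL HLp.
  set (R := Rad lam) in *.
  assert (HR : 0 < R) by (apply (R_pos S M lam R HM); apply Hrad; auto).
  set (Q := fun x => In x S /\ R <= Rad x /\ balls_meet lam R x (Rad x)).
  rewrite <- mult_INR. apply le_INR.
  apply (count_classes cls_eqd Q (cls lam R) M).
  2: { auto. }
  2: { intros x Hx. split; [apply HLp; auto|apply cls_in; auto]. }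
  intros k L' HL' HQ.
  destruct L' as [|x0 L0]; [simpl; lia|].
  destruct (max_in_list (dist4 lam) (x0 :: L0) x0 (or_introl eq_refl)) as [mu [Hmu Hmax]].
  destruct (HQ mu Hmu) as [[HmuS [HmuR Hmeet]] Hkmu].
  destruct (Rlt_dec (dist4 lam mu) R) as [Hlt|Hge].
  - apply (cluster S M lam R); [apply Hrad; auto|auto|].
    intros x Hx. split; [apply HQ; auto|]. specialize (Hmax x Hx). lra.
  - apply (cluster S M mu (Rad mu)); [apply Hrad; auto|auto|].
    intros x Hx. destruct (HQ x Hx) as [[HxS _] Hkx]. split; auto.
    apply (pair_lemma lam mu x R (Rad mu)); auto.
    + destruct Hmeet as [z [Hz1 Hz2]]. unfold in_ball in *.
      pose proof (dist_tri lam z mu). lra.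
    + congruence.
    + lra.
Qed.
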